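(* Let $f:\mathcal M\to\mathcal M_0$ satisfy $|f(A)|\le1$ for all $A\in\mathcal M$ and, for each $A\in\mathcal M$, either $f(A)=0$ or $f(A)_{i,j}(1-2A_{i,j})>0$ for all $i,j\in\mathbb K$. For $\varepsilon\ge0$ let $\mathcal X^\varepsilon$ be the MRN over $\Theta$ with transition cocycle $P_{\mathcal X^\varepsilon}(0,\omega)=I_k$ and $P_{\mathcal X^\varepsilon}(n,\omega)=\big(A_{n-1}+\min\{\varepsilon,1\}f(A_{n-1})\big)\cdots\big(A_0+\min\{\varepsilon,1\}f(A_0)\big)$ for $n\ge1$, $\omega=(A_z)_{z\in\mathbb Z}$. Then, up to a $\mu$-null set, $$\Omega^{(1)}:=\{q^{(1)}=0\}=\{\omega=(A_z)_{z\in\mathbb Z}: f(A_{-1})=f(A_{-2})=\dots=f(A_{-N_0^-(\omega)})=0\}.$$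
   Context: Fix $k\ge2$, $\mathbb K=\{1,\dots,k\}$, $S=\{s_1,\dots,s_k\}$, $e_1,\dots,e_k$ the canonical basis of $\mathbb R^k$; $|\cdot|$ is the $\ell^1$-induced matrix norm (max absolute column sum). $\mathcal M$ is the set of $k\times k$ matrices with entries in $\{0,1\}$ having exactly one entry $1$ in each column; $\mathcal M_0$ is the space of real $k\times k$ matrices with all column sums zero. $\nu$ is the uniform probability on $\mathcal M$, $(\Omega,\mathcal F,\mu)=\bigotimes_{z\in\mathbb Z}(\mathcal M,2^{\mathcal M},\nu)$, $\theta$ the left shift $(A_z)_z\mapsto(A_{z+1})_z$. A Markov random network (MRN) over $\Theta=(\Omega,\mathcal F,\mu,\theta)$ is a Markov process on $S\times\Omega$ moving from fibre $S\times\{\theta^n\omega\}$ to $S\times\{\theta^{n+1}\omega\}$, with transition cocycle $P(n,\omega)_{i,j}=\mathbb P\{X_n=(s_i,\theta^n\omega)\mid X_0=(s_j,\omega)\}$. $\mathcal X^0$ is the DRN with $P^0(n,\omega)=A_{n-1}\cdots A_0$; it is synchronized, with synchronization index $J:\Omega\to\mathbb K$ given by $e_{J(\omega)}=\lim_{n\to\infty}A_{-1}\cdots A_{-n}e_1$ ($\mu$-a.e.). $N_0^-(\omega)=\min\{n\in\mathbb N:\operatorname{rank}(A_{-1}A_{-2}\cdots A_{-n})=1\}$ when this set is nonempty, and $N_0^-(\omega)=1$ otherwise; it is a pull-back synchronization time, i.e. $P^0(n,\theta^{-n}\omega)e_j=e_{J(\omega)}$ for all $j$ and $n\ge N_0^-(\omega)$,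 $\mu$-a.e. Let $P^{(1)}(n,\omega)=\frac{d}{d\varepsilon}P_{\mathcal X^\varepsilon}(n,\omega)|_{\varepsilon=0}$ and, for any pull-back synchronization time $N^-$ (e.g. $N_0^-$), $q^{(1)}(\omega)=P^{(1)}(N^-(\omega),\theta^{-N^-(\omega)}\omega)\,e_{J(\theta^{-N^-(\omega)}\omega)}$ (this is $\mu$-a.e. independent of the choice of $N^-$). *)

(* Defs.v *)
From HB Require Import structures.
From mathcomp Require Import all_boot all_order all_algebra.
From mathcomp Require Import all_classical all_reals all_analysis.
Set Implicit Arguments. Unset Strict Implicit. Unset Printing Implicit Defensive.
Import Order.TTheory GRing.Theory Num.Theory.
Import numFieldNormedType.Exports.
Local Open Scope classical_set_scope.
Local Open Scope ring_scope.

(* The set  \mathcal M  of k x k 0/1 matrices with exactly one 1 in each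
   column is encoded by the finite type of maps g : K -> K (column j has its
   unique 1 in row g j); [mat g] is the corresponding matrix. *)
Definition Mt (k : nat) := {ffun 'I_k -> 'I_k}.
HB.instance Definition _ k := Finite.on (Mt k).
HB.instance Definition _ k := isPointed.Build (Mt k) [ffun i => i].

Definition mat {R : realType} {k : nat} (A : Mt k) : 'M[R]_k :=
  \matrix_(i, j) (i == A j)%:R.

Definition mxnorm1 {R : realType} {k : nat} (B : 'M[R]_k) : R :=
  \big[Num.max/0]_(j < k) \sum_(i < k) `|B i j|.

Definition Omega (k : nat) := int -> Mt k.

Definition coord_sets (k : nat) : set (set (Omega k)) :=
  [set C | exists (z : int) (a : Mt k), C = [set w | w z = a]].

Definition OmegaT (k : nat) := g_sigma_algebraType (@coord_sets k).

(* mu is the product of uniform probabilities nu on M: it gives to every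
   finite-dimensional cylinder its product mass (this determines mu). *)
Definition is_uniform_product {R : realType} {k : nat}
  (mu : probability (OmegaT k) R) : Prop :=
  forall (s : seq int) (a : int -> Mt k), uniq s ->
    mu [set w : OmegaT k | forall z, z \in s -> w z = a z]
    = (((#|Mt k|)%:R : R)^-1 ^+ size s)%:E.

Definition shiftn {k : nat} (m : int) (w : Omega k) : Omega k :=
  fun z => w (z + m).

Definition Peps {R : realType} {k : nat} (f : Mt k -> 'M[R]_k) (eps : R)
  (A : Mt k) : 'M[R]_k := mat A + Num.min eps 1 *: f A.

Fixpoint Pcoc {R : realType} {k : nat} (f : Mt k -> 'M[R]_k) (eps : R)
  (n : nat) (w : Omega k) : 'M[R]_k :=
  match n with
  | 0 => 1%:M
  | n'.+1 => Peps f eps (w n'%:Z) *m Pcoc f eps n' w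
  end.

(* P^(1)(n,w) = d/d eps P_{X^eps}(n,w) at eps = 0 (entrywise; right
   derivative since eps >= 0) *)
Definition P1 {R : realType} {k : nat} (f : Mt k -> 'M[R]_k) (n : nat)
  (w : Omega k) : 'M[R]_k :=
  \matrix_(i, j)
    lim ((fun h : R => (Pcoc f h n w i j - Pcoc f 0 n w i j) / h) @ 0^'+).

Fixpoint Bprod {R : realType} {k : nat} (n : nat) (w : Omega k) : 'M[R]_k :=
  match n with
  | 0 => 1%:M
  | n'.+1 => Bprod n' w *m mat (w (- (n'.+1)%:Z))
  end.

Definition evec {R : realType} {k : nat} (j : 'I_k) : 'cV[R]_k :=
  \col_i (i == j)%:R.
Definition e1 {R : realType} {k : nat} : 'cV[R]_k :=
  \col_(i < k) (val i == 0%N)%:R.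

(* e_{J(w)} = lim_n A_{-1} ... A_{-n} e_1  (limit of a sequence in the
   discrete finite set {e_1,...,e_k}: eventual value); 0 if no limit *)
Definition eJ {R : realType} {k : nat} (w : Omega k) : 'cV[R]_k :=
  xget 0 (fun v : 'cV[R]_k =>
    exists n0 : nat, forall n : nat, (n0 <= n)%N -> Bprod n w *m e1 = v).

Definition N0 {R : realType} {k : nat} (w : Omega k) : nat :=
  match pselect (exists n, (fun n => \rank (@Bprod R k n w) == 1%N) n) with
  | left h => ex_minn h
  | right _ => 1%N
  end.

Definition q1 {R : realType} {k : nat} (f : Mt k -> 'M[R]_k) (w : Omega k)
  : 'cV[R]_k :=
  let N := @N0 R k w in
  P1 f N (shiftn (- (N%:Z)) w) *m eJ (shiftn (- (N%:Z)) w).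

(* Main.v *)
Require Import Defs.
From HB Require Import structures.
From mathcomp Require Import all_boot all_order all_algebra.
From mathcomp Require Import all_classical all_reals all_analysis.
From mathcomp Require Import zify ring lra.
Import Order.TTheory GRing.Theory Num.Theory.
Import numFieldNormedType.Exports.
Local Open Scope classical_set_scope.
Local Open Scope ring_scope.
Set Implicit Arguments. Unset Strict Implicit. Unset Printing Implicit Defensive.
Fixpoint Gf {k : nat} (w : Omega k) (n : nat) : Mt k :=
  match n with 0 => [ffun x => x]
  | n'.+1 => [ffun x => Gf w n' (w (- (n'.+1)%:Z) x)] end.

Lemma mat_mul (R : realType) k (A B : Mt k) :
  (mat A *m mat B : 'M[R]_k) = mat [ffun x => A (B x)].
Proof.
apply/matrixP => i j; rewrite !mxE (bigD1 (B j)) //= !mxE eqxx mulr1 ffunE.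
rewrite big1 ?addr0 // => l /negbTE hl; by rewrite !mxE hl mulr0.
Qed.

Lemma Bprod_mat (R : realType) k (w : Omega k) n :
  (Bprod n w : 'M[R]_k) = mat (Gf w n).
Proof.
elim: n => [|n IH] /=.
  by apply/matrixP => i j; rewrite !mxE ffunE.
rewrite IH mat_mul; congr mat; apply/ffunP => x; by rewrite !ffunE.
Qed.

Lemma mulmx_mat (R : realType) k (X : 'M[R]_k) (A : Mt k) i j :
  (X *m mat A) i j = X i (A j).
Proof.
rewrite !mxE (bigD1 (A j)) //= !mxE eqxx mulr1 big1 ?addr0 // => l /negbTE hl.
by rewrite !mxE hl mulr0.
Qed.

Lemma mulmx_evec (R : realType) k (X : 'M[R]_k) j i :
  (X *m evec j) i 0 = X i j.
Proof.
rewrite !mxE (bigD1 j) //= !mxE eqxx mulr1 big1 ?addr0 // => l /negbTE hl.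
by rewrite !mxE hl mulr0.
Qed.

Lemma mat_e1 (R : realType) k (A : Mt k) (i0 : 'I_k) : val i0 = 0%N ->
  (mat A *m e1 : 'cV[R]_k) = evec (A i0).
Proof.
move=> h0; apply/matrixP => i z; rewrite (ord1 z).
rewrite !mxE (bigD1 i0) //= !mxE h0 eqxx mulr1 big1 ?addr0 // => l hl.
rewrite !mxE; have -> : (val l == 0%N) = false.
  by apply/negP => /eqP hl0; case/eqP: hl; apply: val_inj; rewrite /= hl0 h0.
by rewrite mulr0.
Qed.

Lemma rank_const (R : realType) k (A : Mt k) (c : 'I_k) :
  (forall x, A x = c) -> \rank (mat A : 'M[R]_k) = 1%N.
Proof.
move=> hA.
have -> : (mat A : 'M[R]_k) = (evec c : 'M[R]_(k,1)) *m (const_mx 1 : 'M[R]_(1,k)).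
  apply/matrixP => i j; rewrite !mxE big_ord1 !mxE mulr1 hA //.
apply/eqP; rewrite eqn_leq; apply/andP; split.
  exact: leq_trans (mxrankM_maxl _ _) (rank_leq_col _).
rewrite lt0n mxrank_eq0; apply/negP => /eqP /matrixP /(_ c c).
by rewrite !mxE big_ord1 !mxE eqxx mulr1 => /eqP; rewrite oner_eq0.
Qed.
Fixpoint Qh {R : realType} {k : nat} (f : Mt k -> 'M[R]_k) (h : R) (w : Omega k)
  (n : nat) : 'M[R]_k :=
  match n with 0 => 1%:M
  | n'.+1 => Qh f h w n' *m Peps f h (w (- (n'.+1)%:Z)) end.

Fixpoint Dm {R : realType} {k : nat} (f : Mt k -> 'M[R]_k) (w : Omega k)
  (n : nat) : 'M[R]_k :=
  match n with 0 => 0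
  | n'.+1 => Dm f w n' *m mat (w (- (n'.+1)%:Z)) + Bprod n' w *m f (w (- (n'.+1)%:Z)) end.

Lemma Qh_shift (R : realType) k (f : Mt k -> 'M[R]_k) h (w : Omega k) n :
  forall a, Qh f h w (a + n) = Qh f h w a *m Pcoc f h n (shiftn (- (a + n)%:Z) w).
Proof.
elim: n => [|n IH] a.
  by rewrite addn0 /= mulmx1.
rewrite /= -addSnnS IH /= mulmxA; congr (_ *m _).
  congr (_ *m Peps f h _); rewrite /shiftn; congr (w _); lia.
Qed.

Lemma Pcoc_Qh (R : realType) k (f : Mt k -> 'M[R]_k) h (w : Omega k) n :
  Pcoc f h n (shiftn (- n%:Z) w) = Qh f h w n.
Proof. by rewrite -[in RHS](add0n n) Qh_shift /= mul1mx. Qed.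

Lemma Peps0 (R : realType) k (f : Mt k -> 'M[R]_k) A : Peps f 0 A = mat A.
Proof.
rewrite /Peps; have -> : Num.min (0:R) 1 = 0 by rewrite /Num.min ltr01.
by rewrite scale0r addr0.
Qed.

Lemma Qh0 (R : realType) k (f : Mt k -> 'M[R]_k) (w : Omega k) n :
  Qh f 0 w n = Bprod n w.
Proof. by elim: n => //= n ->; rewrite Peps0. Qed.
Lemma cvg_sumlist (R : realType) (J : Type) (r : seq J) (g : J -> R -> R) (l : J -> R) :
  (forall j, g j x @[x --> (0:R)^'+] --> l j) ->
  (\sum_(j <- r) g j x) @[x --> (0:R)^'+] --> \sum_(j <- r) l j.
Proof.
move=> hg; elim: r => [|a r IH].
  rewrite big_nil; under eq_fun do rewrite big_nil; exact: cvg_cst.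
rewrite big_cons; under eq_fun do rewrite big_cons.
exact: cvgD.
Qed.

Lemma Qh_cvg (R : realType) k (f : Mt k -> 'M[R]_k) (w : Omega k) n :
  forall i j, (Qh f h w n i j - Qh f 0 w n i j) / h @[h --> (0:R)^'+] --> Dm f w n i j.
Proof.
elim: n => [|n IH] i j.
  have E : forall h, Qh f h w 0 = 1%:M by [].
  have -> : Dm f w 0 i j = 0 by rewrite /= mxE.
  under eq_fun do rewrite !E subrr mul0r.
  exact: cvg_cst.
have hQ : forall l, Qh f h w n i l @[h --> (0:R)^'+] --> Qh f 0 w n i l.
  move=> l.
  have H2 : (fun h => Qh f 0 w n i l + h * ((Qh f h w n i l - Qh f 0 w n i l) / h))
     @ (0:R)^'+ --> Qh f 0 w n i l + 0 * Dm f w n i l.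
    apply: cvgD; first exact: cvg_cst.
    by apply: cvgM; [exact: (cvg_at_right_filter cvg_id) | exact: IH].
  rewrite mul0r addr0 in H2.
  apply: cvg_trans H2; apply: near_eq_cvg.
  near=> h.
  have h0 : 0 < h by near: h; exact: nbhs_right_gt.
  rewrite /= mulrC divfK; last by rewrite gt_eqF.
  by rewrite addrC subrK.
rewrite [Dm _ _ _.+1]/=.
set g := fun h => \sum_(l < k) ((Qh f h w n i l - Qh f 0 w n i l) / h) * mat (w (- (n.+1)%:Z)) l j
  + \sum_(l < k) Qh f h w n i l * f (w (- (n.+1)%:Z)) l j.
have Hg : g @ (0:R)^'+ --> Dm f w n.+1 i j.
  rewrite /g /= !mxE; apply: cvgD; apply: cvg_sumlist => l.
    exact: cvgMl (IH i l).
  by rewrite -(Qh0 f); exact: cvgMl (hQ l).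
apply: cvg_trans Hg; apply: near_eq_cvg.
near=> h.
have h0 : 0 < h by near: h; exact: nbhs_right_gt.
have h1 : h < 1 by near: h; exact: nbhs_right_lt.
rewrite /g [Qh _ _ _ n.+1]/= [Qh _ 0 _ n.+1]/= /Peps.
have -> : Num.min h 1 = h by rewrite /Num.min h1.
have -> : Num.min (0:R) 1 = 0 by rewrite /Num.min ltr01.
rewrite !Qh0.
rewrite !mxE -sumrB -big_split /= mulr_suml; apply: eq_bigr => l _.
rewrite !mxE; field; by rewrite gt_eqF.
Unshelve. all: end_near.
Qed.
Lemma P1_Dm (R : realType) k (f : Mt k -> 'M[R]_k) (w : Omega k) N :
  P1 f N (shiftn (- N%:Z) w) = Dm f w N.
Proof.
apply/matrixP => i j; rewrite mxE.
under eq_fun do rewrite !Pcoc_Qh.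
by apply: cvg_lim => //; exact: Qh_cvg.
Qed.

Definition ncb {k} (A : Mt k) : bool := [exists a, exists b, A a != A b].

Lemma sumF_neg (R : realType) k (A : Mt k) (F : 'M[R]_k) (G : Mt k) j :
  (forall l, \sum_(i < k) F i l = 0) ->
  (forall i l, 0 < F i l * (1 - 2 * (mat A : 'M[R]_k) i l)) -> ncb G ->
  \sum_(l < k) (G (A j) == G l)%:R * F l j < 0.
Proof.
move=> h0 hpos /existsP [a /existsP [b hab]].
set c := G (A j).
have pos : forall l, c != G l -> 0 < F l j.
  move=> l hl; have := hpos l j; rewrite !mxE.
  have -> : (l == A j) = false by apply/negP => /eqP e; move: hl; rewrite /c e eqxx.
  by rewrite mulr0 subr0 mulr1.
have -> : \sum_(l < k) (c == G l)%:R * F l j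
    = \sum_(l < k) F l j - \sum_(l < k) (c != G l)%:R * F l j.
  rewrite -sumrB; apply: eq_bigr => l _; case: (c == G l) => /=; ring.
rewrite h0 sub0r oppr_lt0.
have [l0 hl0] : exists l0, c != G l0.
  case: (boolP (c == G a)) => [/eqP ha|ha]; last by exists a.
  by exists b; rewrite ha.
rewrite (bigD1 l0) //= hl0 mul1r.
have hs : 0 <= \sum_(i < k | i != l0) (c != G i)%:R * F i j.
  apply: sumr_ge0 => l _; case: (boolP (c != G l)) => hl; last by rewrite mul0r.
  by rewrite mul1r ltW // pos.
have := pos l0 hl0; lra.
Qed.

Lemma Dm_zero (R : realType) k (f : Mt k -> 'M[R]_k) (w : Omega k) n :
  (forall m, (1 <= m <= n)%N -> f (w (- m%:Z)) = 0) -> Dm f w n = 0.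
Proof.
elim: n => [//|n IH] H /=.
rewrite IH ?mul0mx ?add0r; last by move=> m /andP [h1 h2]; apply: H; rewrite h1 (leq_trans h2).
by rewrite H ?mulmx0 // leqnn.
Qed.

Lemma Dm_diag (R : realType) k (f : Mt k -> 'M[R]_k) (w : Omega k)
  (hf0 : forall (A : Mt k) (j : 'I_k), \sum_(i < k) f A i j = 0)
  (hfs : forall A : Mt k, f A = 0 \/
     forall i j : 'I_k, 0 < f A i j * (1 - 2 * (mat A : 'M[R]_k) i j)) n :
  (forall m, (m < n)%N -> ncb (Gf w m)) ->
  forall j, Dm f w n (Gf w n j) j <= 0 /\
    (Dm f w n (Gf w n j) j = 0 -> forall m, (1 <= m <= n)%N -> f (w (- m%:Z)) = 0).
Proof.
elim: n => [|n IH] hnc j.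
  split; first by rewrite /= mxE.
  by move=> _ m /andP [h1 h2]; move: (leq_trans h1 h2).
have [IH1 IH2] := IH (fun m hm => hnc m (ltnW hm)) (w (- (n.+1)%:Z) j).
have -> : Dm f w n.+1 (Gf w n.+1 j) j =
   Dm f w n (Gf w n (w (- (n.+1)%:Z) j)) (w (- (n.+1)%:Z) j)
   + \sum_(l < k) (Gf w n (w (- (n.+1)%:Z) j) == Gf w n l)%:R * f (w (- (n.+1)%:Z)) l j.
  rewrite /= [in LHS]mxE mulmx_mat ffunE Bprod_mat mxE; congr (_ + _).
  by apply: eq_bigr => l _; rewrite mxE.
case: (hfs (w (- (n.+1)%:Z))) => [hz|hp].
  have -> : \sum_(l < k) (Gf w n (w (- (n.+1)%:Z) j) == Gf w n l)%:R * f (w (- (n.+1)%:Z)) l j = 0.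
    by apply: big1 => l _; rewrite hz mxE mulr0.
  rewrite addr0; split => // h0 m /andP [h1 h2].
  case: (ltngtP m n.+1) => [hlt||->] //; last by rewrite ltnNge h2.
  by apply: IH2 => //; rewrite h1 -ltnS.
have := @sumF_neg _ _ _ _ _ j (hf0 (w (- (n.+1)%:Z))) hp (hnc n (ltnSn n)).
move=> hneg; split; first lra.
move=> h; exfalso; lra.
Qed.
Lemma ncbP k (A : Mt k) : ~~ ncb A -> forall a b, A a = A b.
Proof.
move=> H a b; apply/eqP; apply/negPn; apply/negP => hab; move/negP: H; apply.
by apply/existsP; exists a; apply/existsP; exists b.
Qed.

Lemma N0_nonconst (R : realType) k (hk : (2 <= k)%N) (w : Omega k) m :
  (m < @N0 R k w)%N -> ncb (Gf w m).
Proof.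
have k0 : (0 < k)%N by apply: leq_trans hk.
rewrite /N0; case: pselect => [h|hn].
  case: ex_minnP => N hN hmin hm.
  case E: (ncb (Gf w m)) => //; exfalso.
  have hc := ncbP (negbT E).
  have := hmin m; rewrite Bprod_mat (@rank_const R _ _ (Gf w m (Ordinal k0))) //.
  by move=> /(_ isT); rewrite leqNgt hm.
rewrite ltnS leqn0 => /eqP ->.
apply/existsP; exists (Ordinal k0); apply/existsP; exists (Ordinal hk).
by rewrite /= !ffunE.
Qed.

Lemma Gf_const k (u : Omega k) i c :
  (forall x, u (- (i.+1)%:Z) x = c) -> forall n x, Gf u (i.+1 + n) x = Gf u i c.
Proof.
move=> hc; elim=> [|n IH] x.
  by rewrite addn0 /= ffunE hc.
by rewrite addnS /= ffunE IH.
Qed.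

Lemma eJ_basis (R : realType) k (hk : (0 < k)%N) (w : Omega k) N :
  (forall M, exists i, ~~ ncb (w (- (M + i)%:Z)%R)) ->
  exists j, (eJ (shiftn (- N%:Z) w) : 'cV[R]_k) = evec j.
Proof.
move=> H; set u := shiftn (- N%:Z) w.
have [i hi] := H N.+1.
set x0 := Ordinal hk.
have hc : forall x, u (- (i.+1)%:Z) x = u (- (i.+1)%:Z) x0.
  have -> : u (- (i.+1)%:Z) = w (- (N.+1 + i)%:Z).
    rewrite /u /shiftn; congr (w _); lia.
  by move=> x; apply: ncbP.
have ev := Gf_const hc.
set v0 : 'cV[R]_k := evec (Gf u i (u (- (i.+1)%:Z) x0)).
have Pv0 : forall n, (i.+1 <= n)%N -> (Bprod n u *m e1 : 'cV[R]_k) = v0.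
  move=> n hn; rewrite Bprod_mat (@mat_e1 _ _ _ x0) // -(subnKC hn) ev //.
exists (Gf u i (u (- (i.+1)%:Z) x0)); rewrite -/v0.
rewrite /eJ; case: xgetP => [v _ [n1 Hn1] | hnone]; last first.
  by exfalso; apply: (hnone v0); exists i.+1.
rewrite -(Hn1 (maxn n1 i.+1)) ?leq_maxl // Pv0 // leq_maxr.
by [].
Qed.
Lemma pointwise (R : realType) k (hk : (2 <= k)%N)
  (f : Mt k -> 'M[R]_k)
  (hf0 : forall (A : Mt k) (j : 'I_k), \sum_(i < k) f A i j = 0)
  (hfs : forall A : Mt k, f A = 0 \/
     forall i j : 'I_k, 0 < f A i j * (1 - 2 * (mat A : 'M[R]_k) i j))
  (w : Omega k) :
  (forall M, exists i, ~~ ncb (w (- (M + i)%:Z)%R)) ->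
  (q1 f w = 0 <->
       forall m : nat, (1 <= m <= @N0 R k w)%N -> f (w (- (m%:Z))) = 0).
Proof.
move=> HC; rewrite /q1 P1_Dm.
have k0 : (0 < k)%N by apply: leq_trans hk.
have [j ->] := @eJ_basis R k k0 w (@N0 R k w) HC.
split.
  move=> hq.
  have [_ h2] := @Dm_diag R k f w hf0 hfs (@N0 R k w) (@N0_nonconst R k hk w) j.
  apply: h2.
  have := congr1 (fun M : 'cV[R]_k => M (Gf w (@N0 R k w) j) 0) hq.
  by rewrite mulmx_evec mxE.
by move=> H; rewrite (Dm_zero H) mul0mx.
Qed.
Definition Lset k (t : seq int) (P : int -> pred (Mt k)) : set (OmegaT k) :=
  [set w : OmegaT k | forall z, z \in t -> P z (w z)].

Lemma bigsetUP (T : Type) (I : eqType) (r : seq I) (P : pred I) (F : I -> set T) x :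
  (\big[setU/set0]_(a <- r | P a) F a) x <-> exists2 a, (a \in r) && P a & F a x.
Proof.
elim: r => [|b r IH].
  by rewrite big_nil; split => // [[a]].
rewrite big_cons; split.
  case: ifP => hP.
    case => [hb|/IH [a /andP [h1 h2] h3]]; first by exists b; rewrite ?mem_head ?hP.
    by exists a => //; rewrite inE h1 orbT h2.
  by move=> /IH [a /andP [h1 h2] h3]; exists a => //; rewrite inE h1 orbT h2.
move=> [a /andP [h1 h2] h3]; move: h1; rewrite inE => /orP [/eqP e|h1].
  by subst a; rewrite h2; left.
have hr : (\big[setU/set0]_(a0 <- r | P a0) F a0) x by apply/IH; exists a => //; rewrite h1 h2.
by case: ifP => _ //; right.
Qed.

Lemma coord_meas k z (P : pred (Mt k)) : measurable [set w : OmegaT k | P (w z)].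
Proof.
have -> : [set w : OmegaT k | P (w z)] =
    \big[setU/set0]_(a <- enum (Mt k) | P a) [set w : OmegaT k | w z = a].
  apply/seteqP; split => w /=.
    by move=> hP; apply/bigsetUP; exists (w z) => //; rewrite mem_enum hP.
  by move=> /bigsetUP [a /andP [_ h] ->].
apply: bigsetU_measurable => a _; apply: sub_sigma_algebra; by exists z, a.
Qed.

Lemma Lset_meas k t (P : int -> pred (Mt k)) : measurable (Lset t P).
Proof.
elim: t => [|z t IH].
  have -> : Lset [::] P = setT by apply/seteqP; split => w //= _ z.
  exact: measurableT.
have -> : Lset (z :: t) P = [set w : OmegaT k | P z (w z)] `&` Lset t P.
  apply/seteqP; split => w /=.
    by move=> H; split; [apply: H; rewrite mem_head | move=> y hy; apply: H; rewrite inE hy orbT].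
  by move=> [h1 h2] y; rewrite inE => /orP [/eqP ->|]; [|exact: h2].
exact: measurableI (coord_meas _ _) IH.
Qed.

Lemma mu_bigU_bound (R : realType) k (mu : probability (OmegaT k) R) (I : Type)
  (r : seq I) (F : I -> set (OmegaT k)) (x : R) :
  (forall i, measurable (F i)) -> (forall i, (mu (F i) <= x%:E)%E) ->
  (mu (\big[setU/set0]_(i <- r) F i) <= ((size r)%:R * x)%:E)%E.
Proof.
move=> hm hx; elim: r => [|a r IH].
  by rewrite big_nil measure0 mul0r.
rewrite big_cons; apply: le_trans (measureU2 _ (hm a) _) _.
  by apply: bigsetU_measurable.
have -> : ((size (a :: r))%:R * x)%:E = (x%:E + ((size r)%:R * x)%:E)%E.
  by rewrite -EFinD /= -addn1 natrD; congr EFin; ring.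
exact: leeD (hx a) IH.
Qed.

Definition ncount k : nat := size (seq.filter (@ncb k) (enum (Mt k))).

Lemma cyl_bound (R : realType) k (mu : probability (OmegaT k) R)
  (hmu : is_uniform_product mu) t :
  forall (s : seq int) (a : int -> Mt k), uniq (s ++ t) ->
  (mu (Lset s (fun z b => b == a z) `&` Lset t (fun _ => @ncb k))
   <= ((((#|Mt k|)%:R : R)^-1 ^+ size s) *
       ((ncount k)%:R * ((#|Mt k|)%:R : R)^-1) ^+ size t)%:E)%E.
Proof.
elim: t => [|z t IH] s a hu.
  have -> : Lset s (fun z b => b == a z) `&` Lset [::] (fun _ => @ncb k) =
     [set w : OmegaT k | forall z, z \in s -> w z = a z].
    apply/seteqP; split => w /=.
      by move=> [h _] z hz; apply/eqP; apply: h.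
    by move=> h; split => // z hz; apply/eqP; apply: h.
  by rewrite hmu ?expr0 ?mulr1 // -(cats0 s).
set a' := fun b : Mt k => fun y : int => if y == z then b else a y.
have zs : z \notin s.
  by move: hu; rewrite cat_uniq => /and3P [_ /hasPn /(_ z (mem_head _ _)) /negP h _]; apply/negP.
have hu' : uniq ((z :: s) ++ t).
  by move: hu; rewrite -[z :: t]cat1s uniq_catCA.

set U := \big[setU/set0]_(b <- seq.filter (@ncb k) (enum (Mt k)))
          (Lset (z :: s) (fun y bb => bb == a' b y) `&` Lset t (fun _ => @ncb k)).
have hsub : Lset s (fun z b => b == a z) `&` Lset (z :: t) (fun _ => @ncb k) `<=` U.
  move=> w /= [h1 h2].
  have hz : ncb (w z) by apply: h2; rewrite mem_head.
  have := @bigsetUP _ _ (seq.filter (@ncb k) (enum (Mt k))) xpredT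
    (fun b => Lset (z :: s) (fun y bb => bb == a' b y) `&` Lset t (fun _ => @ncb k)) w.
  rewrite /U big_filter_cond /= => -> ; exists (w z); first by rewrite mem_filter hz mem_enum.
  split.
    move=> y; rewrite inE => /orP [/eqP ->|hy]; first by rewrite /a' eqxx.
    rewrite /a'; have -> : (y == z) = false.
      by apply/negP => /eqP e; move: zs; rewrite -e hy.
    exact: h1.
  by move=> y hy; apply: h2; rewrite inE hy orbT.
have m1 : Lset s (fun z b => b == a z) `&` Lset (z :: t) (fun _ => @ncb k) \in measurable.
  by rewrite inE; apply: measurableI; apply: Lset_meas.
have m2 : U \in measurable.
  by rewrite inE; apply: bigsetU_measurable => b _; apply: measurableI; apply: Lset_meas.
apply: le_trans (le_measure mu m1 m2 hsub) _.
have hb := @mu_bigU_bound R k mu _ (seq.filter (@ncb k) (enum (Mt k)))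
    (fun b => Lset (z :: s) (fun y bb => bb == a' b y) `&` Lset t (fun _ => @ncb k))
    (((#|Mt k|)%:R : R)^-1 ^+ size (z :: s) *
       ((ncount k)%:R * ((#|Mt k|)%:R : R)^-1) ^+ size t).
apply: le_trans (hb _ _) _.
- by move=> b; apply: measurableI; apply: Lset_meas.
- by move=> b; apply: IH.
rewrite lee_fin /= -/(ncount k) !exprS; rewrite le_eqVlt; apply/orP; left; apply/eqP; ring.
Qed.
Lemma ncount_lt k (hk : (0 < k)%N) : (ncount k < #|Mt k|)%N.
Proof.
rewrite /ncount size_filter cardE -(count_predC (@ncb k) (enum (Mt k))).
rewrite -{1}(addn0 (count _ _)) ltn_add2l -has_count.
apply/hasP; exists [ffun _ => Ordinal hk]; first by rewrite mem_enum.
apply/negP => /existsP [a /existsP [b]]; by rewrite !ffunE eqxx.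
Qed.

Lemma geom_zero (R : realType) (x : \bar R) (r : R) :
  (0 <= x)%E -> 0 <= r < 1 -> (forall n, (x <= (r ^+ n)%:E)%E) -> x = 0%E.
Proof.
move=> hx /andP [r0 r1] H.
case: x hx H => [x| |] hx H; last by [].
  2: by have := H 0%N; rewrite leye_eq.
have hx' : 0 <= x by rewrite -lee_fin.
have : x <= 0.
  have hc : (GRing.exp r : R ^nat) @ \oo --> 0 by apply: cvg_expr; rewrite ger0_norm.
  have hn : \forall n \near \oo, [set y | x <= y] ((GRing.exp r : R ^nat) n).
    by near=> n; rewrite /= -lee_fin; exact: H.
  exact: (closed_cvg [set y | x <= y] (@closed_ge R x) hn 0 hc).
Unshelve. all: try end_near.
by move=> h; congr EFin; apply/eqP; rewrite eq_le h hx'.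
Qed.
Definition SM k (M : nat) : set (OmegaT k) :=
  [set w : OmegaT k | forall i : nat, ncb (w (- (M + i)%:Z)%R)].

Lemma SM_meas k M : measurable (@SM k M).
Proof.
have -> : @SM k M = \bigcap_i [set w : OmegaT k | ncb (w (- (M + i)%:Z)%R)].
  apply/seteqP; split => w /= H i; first by move=> _; apply: H.
  exact: (H i I).
by apply: bigcapT_measurable => i; apply: coord_meas.
Qed.

Lemma SM_null (R : realType) k (hk : (0 < k)%N) (mu : probability (OmegaT k) R)
  (hmu : is_uniform_product mu) M : mu (@SM k M) = 0%E.
Proof.
set r : R := (ncount k)%:R * ((#|Mt k|)%:R : R)^-1.
have hc : (0 < (#|Mt k|)%:R :> R) by rewrite ltr0n; apply: leq_ltn_trans (ncount_lt hk).
apply: (@geom_zero R _ r); first exact: measure_ge0.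
  apply/andP; split; first by rewrite mulr_ge0 // invr_ge0 ltW.
  by rewrite /r ltr_pdivrMr // mul1r ltr_nat ncount_lt.
move=> n.
set tl := map (fun i : nat => - (M + i)%:Z) (iota 0 n).
have hu : uniq ([::] ++ tl).
  rewrite cat0s map_inj_uniq ?iota_uniq // => i j h; lia.
have := @cyl_bound R k mu hmu tl [::] (fun _ => [ffun x => x]) hu.
rewrite /= expr0 mul1r size_map size_iota -/r => hb.
apply: le_trans hb.
apply: le_measure; rewrite ?inE.
- exact: SM_meas.
- by apply: measurableI; apply: Lset_meas.
move=> w /= H; split => // z /mapP [i _ ->]; exact: H.
Qed.
Theorem proposition6p2 (R : realType) (k : nat) (hk : (2 <= k)%N)
  (f : Mt k -> 'M[R]_k)
  (hf0 : forall (A : Mt k) (j : 'I_k), \sum_(i < k) f A i j = 0)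
  (hfn : forall A : Mt k, mxnorm1 (f A) <= 1)
  (hfs : forall A : Mt k, f A = 0 \/
     forall i j : 'I_k, 0 < f A i j * (1 - 2 * (mat A : 'M[R]_k) i j))
  (mu : probability (OmegaT k) R) (hmu : is_uniform_product mu) :
  exists Nul : set (OmegaT k),
    measurable Nul /\ mu Nul = 0%E /\
    forall w : OmegaT k, ~ Nul w ->
      (q1 f w = 0 <->
       forall m : nat, (1 <= m <= @N0 R k w)%N -> f (w (- (m%:Z))) = 0).
Proof.
have k0 : (0 < k)%N by apply: leq_trans hk.
exists (\bigcup_M @SM k M); split; first by apply: bigcupT_measurable => M; exact: SM_meas.
split.
  apply/eqP; rewrite eq_le measure_ge0 andbT.
  apply: le_trans (measure_sigma_subadditive mu (fun M => SM_meas M) _ (@subset_refl _ _)) _.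
    by apply: bigcupT_measurable => M; exact: SM_meas.
  by rewrite eseries0 // => M _ _; apply: SM_null.
move=> w hw; apply: pointwise => // M.
apply: contrapT => hn; apply: hw; exists M => // i.
case E: (ncb (w (- (M + i)%:Z)%R)) => //; exfalso; apply: hn; exists i; by rewrite E.
Qed.
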